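(* Let $G=(V,E)$ be a finite connected chordal (decomposable) graph with $V=\{1,\dots,n\}$, and let $(C_1,\dots,C_k)$ be a perfect ordering of its cliques. For $q=2,\dots,k$ let $H_q=C_1\cup\dots\cup C_q$ (with $H_1=C_1$), $S_q=C_q\cap H_{q-1}$, $A_q=H_{q-1}\setminus S_q$ and $B_q=C_q\setminus S_q$. Let $N$ be a symmetric positive definite $n\times n$ real matrix and $M=N_G$. Then $M$ is positive definite if and only if for every $2\le q\le k$, $$S_1^{(q)}+S_2^{(q)}-M_{S_qS_q}$$ is positive definite, where $S_1^{(q)}=M_{S_qS_q}-M_{S_qA_q}M_{A_qA_q}^{-1}M_{A_qS_q}$ and $S_2^{(q)}=M_{S_qS_q}-M_{S_qB_q}M_{B_qB_q}^{-1}M_{B_qS_q}$.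
   Context: A graph is chordal (decomposable) if it has no induced cycle of length $\ge 4$. A clique is a maximal complete induced subgraph (identified with its vertex set). An ordering $(C_1,\dots,C_k)$ of the cliques is perfect if for every $q=2,\dots,k$ there exists $p\le q-1$ with $C_q\cap (C_1\cup\dots\cup C_{q-1})\subseteq C_p$. For a symmetric $n\times n$ real matrix $N=(n_{ij})$, $N_G$ is defined by $(N_G)_{ij}=n_{ij}$ if $i=j$ or $(i,j)\in E$, and $0$ otherwise. For $X,Y\subseteq V$, $M_{XY}$ is the submatrix of $M$ with rows in $X$ and columns in $Y$. *)

(* Defs.v *)
From HB Require Import structures.
From mathcomp Require Import all_boot all_order all_algebra.
Set Implicit Arguments. Unset Strict Implicit. Unset Printing Implicit Defensive.
Import Order.TTheory GRing.Theory Num.Theory.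
Local Open Scope ring_scope.

(* Simple graph on V = 'I_n (vertices 0..n-1 stand for 1..n): a symmetric,
   irreflexive relation e. *)
Definition simple_graph n (e : rel 'I_n) :=
  symmetric e /\ irreflexive e.

Definition connected_graph n (e : rel 'I_n) :=
  forall x y : 'I_n, connect e x y.

Definition induced_cycle n (e : rel 'I_n) (p : seq 'I_n) :=
  [/\ 4 <= size p, uniq p &
      {in p &, forall x y, e x y = (y == next p x) || (x == next p y)}]%N.

Definition chordal n (e : rel 'I_n) :=
  ~ exists p : seq 'I_n, induced_cycle e p.

Definition complete_set n (e : rel 'I_n) (X : {set 'I_n}) :=
  [forall x in X, forall y in X, (x != y) ==> e x y].

Definition is_clique n (e : rel 'I_n) (C : {set 'I_n}) :=
  maxset (complete_set e) C.

Definition clique_ordering n (e : rel 'I_n) (s : seq {set 'I_n}) :=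
  uniq s /\ (forall C, C \in s <-> is_clique e C).

Definition Hun n (s : seq {set 'I_n}) (q : nat) : {set 'I_n} :=
  \bigcup_(i < q) nth set0 s i.

(* perfect ordering (0-based: the q-th clique is nth set0 s q) *)
Definition perfect_ordering n (e : rel 'I_n) (s : seq {set 'I_n}) :=
  clique_ordering e s /\
  forall q, (1 <= q < size s)%N ->
    exists2 p, (p < q)%N & nth set0 s q :&: Hun s q \subset nth set0 s p.

(* separator, and the two residual sets, for 0-based index q >= 1 *)
Definition Sep n (s : seq {set 'I_n}) q := nth set0 s q :&: Hun s q.
Definition Aset n (s : seq {set 'I_n}) q := Hun s q :\: Sep s q.
Definition Bset n (s : seq {set 'I_n}) q := nth set0 s q :\: Sep s q.

Definition restrict_graph (R : ringType) n (e : rel 'I_n) (N : 'M[R]_n) : 'M[R]_n :=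
  \matrix_(i, j) (if (i == j) || e i j then N i j else 0).

Definition submx_set (R : Type) n (M : 'M[R]_n) (X Y : {set 'I_n})
  : 'M[R]_(#|X|, #|Y|) :=
  \matrix_(i, j) M (enum_val i) (enum_val j).

Definition posdef (R : numDomainType) m (A : 'M[R]_m) :=
  A^T = A /\ forall x : 'cV[R]_m, x != 0 -> 0 < (x^T *m A *m x) 0 0.

(* Main.v *)
Require Import Defs.
From HB Require Import structures.
From mathcomp Require Import all_boot all_order all_algebra.
Set Implicit Arguments. Unset Strict Implicit. Unset Printing Implicit Defensive.
Import Order.TTheory GRing.Theory Num.Theory.

Section Graph.
Variable n : nat.
Variable e : rel 'I_n.
Variable s : seq {set 'I_n}.
Hypothesis sg : simple_graph e.
Hypothesis po : perfect_ordering e s.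

Lemma clique_in_s C : is_clique e C -> C \in s.
Proof. by move=> h; apply/(po.1.2 C). Qed.
Lemma in_s_clique C : C \in s -> is_clique e C.
Proof. by move=> h; apply/(po.1.2 C). Qed.

Lemma HunP x q : reflect (exists2 i, i < q & x \in nth set0 s i) (x \in Hun s q).
Proof.
apply: (iffP bigcupP) => [[i _ h]|[i iq h]]; first by exists i.
by exists (Ordinal iq).
Qed.

Lemma Hun_mono q r : q <= r -> Hun s q \subset Hun s r.
Proof.
move=> qr; apply/subsetP => x /HunP [i iq h]; apply/HunP; exists i => //.
exact: leq_trans iq qr.
Qed.

Lemma HunS q : Hun s q.+1 = Hun s q :|: nth set0 s q.
Proof. by rewrite /Hun big_ord_recr. Qed.

Lemma complete_sub X : complete_set e X ->
  exists2 r, r < size s & X \subset nth set0 s r.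
Proof.
move=> hX; have [C mC sub] := maxset_exists hX.
have Cs := clique_in_s mC.
by exists (index C s); rewrite ?index_mem ?nth_index.
Qed.

Lemma cover x : x \in Hun s (size s).
Proof.
have hX : complete_set e [set x].
  apply/forallP => y; apply/implyP => /set1P ->.
  apply/forallP => z; apply/implyP => /set1P ->; by rewrite eqxx.
have [r rs sub] := complete_sub hX.
by apply/HunP; exists r => //; apply: (subsetP sub); rewrite set11.
Qed.

Lemma size_pos : 0 < size s.
Proof.
have hX : complete_set e set0 by apply/forallP => y; rewrite inE.
by have [r rs _] := complete_sub hX; apply: leq_ltn_trans rs.
Qed.

Lemma no_edge q a b : 1 <= q < size s -> a \in Aset s q -> b \in Bset s q ->
  ~~ e a b.
Proof.
move=> /andP[q1 qs] Ha Hb.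
move: Ha; rewrite /Aset /Sep !inE negb_and => /andP[h1 aH].
rewrite aH orbF in h1.
move: Hb; rewrite /Bset /Sep !inE negb_and => /andP[h2 bC].
rewrite bC /= in h2.
apply/negP => eab.
have eba : e b a by rewrite sg.1.
have ab : a != b by apply: contraNneq h2 => <-.
have hX : complete_set e [set a; b].
  apply/forallP => x; apply/implyP => /set2P [] ->;
  apply/forallP => y; apply/implyP => /set2P [] ->;
  by rewrite ?eqxx ?eab ?eba ?implybT.
have exP : exists r, (r < size s) && ([set a; b] \subset nth set0 s r).
  by have [r rs sub] := complete_sub hX; exists r; rewrite rs sub.
case: (ex_minnP exP) => r /andP[rs sub] minr.
have ar : a \in nth set0 s r by apply: (subsetP sub); rewrite set21.
have br : b \in nth set0 s r by apply: (subsetP sub); rewrite set22.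
case: (ltngtP r q) => [rq|qr|rq].
- by move: h2 => /negP; apply; apply/HunP; exists r.
- have r1 : 1 <= r < size s by rewrite rs (leq_trans q1 (ltnW qr)).
  have [p pr hp] := po.2 r r1.
  have aHr : a \in Hun s r by apply: (subsetP (Hun_mono (ltnW qr))).
  have bHr : b \in Hun s r by apply/HunP; exists q.
  have subp : [set a; b] \subset nth set0 s p.
    apply/subsetP => x /set2P [] ->; apply: (subsetP hp); by rewrite inE ?ar ?br ?aHr ?bHr.
  have := minr p; rewrite subp (ltn_trans pr rs) => /(_ isT).
  by rewrite leqNgt pr.
- by move: h1; rewrite -rq ar.
Qed.
End Graph.

Local Open Scope ring_scope.
From mathcomp Require Import ring lra.

Section Mx.
Variable R : realFieldType.
Variable n : nat.

Definition Pm (X : {set 'I_n}) : 'M[R]_(n, #|X|) :=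
  \matrix_(i, j) (i == enum_val j)%:R.

Lemma sum_pickl (F : 'I_n -> R) a : \sum_k (k == a)%:R * F k = F a.
Proof.
rewrite (bigD1 a) //= eqxx mul1r big1 ?addr0 // => k /negbTE ->; by rewrite mul0r.
Qed.
Lemma sum_pickr (F : 'I_n -> R) a : \sum_k F k * (k == a)%:R = F a.
Proof.
rewrite (bigD1 a) //= eqxx mulr1 big1 ?addr0 // => k /negbTE ->; by rewrite mulr0.
Qed.

Lemma PtM (X : {set 'I_n}) m (A : 'M[R]_(n, m)) i j :
  ((Pm X)^T *m A) i j = A (enum_val i) j.
Proof.
rewrite mxE -(sum_pickl (fun k => A k j) (enum_val i)); apply: eq_bigr => k _; by rewrite !mxE.
Qed.

Lemma MP (X : {set 'I_n}) m (A : 'M[R]_(m, n)) i j :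
  (A *m Pm X) i j = A i (enum_val j).
Proof.
rewrite mxE -(sum_pickr (fun k => A i k) (enum_val j)); apply: eq_bigr => k _; by rewrite !mxE.
Qed.

Lemma submxE (M : 'M[R]_n) (X Y : {set 'I_n}) : submx_set M X Y = (Pm X)^T *m M *m Pm Y.
Proof. apply/matrixP => i j; by rewrite MP PtM mxE. Qed.

Lemma PtP (X : {set 'I_n}) : (Pm X)^T *m Pm X = 1%:M.
Proof.
apply/matrixP => i j; rewrite PtM !mxE (inj_eq enum_val_inj); by case: (i == j).
Qed.

Lemma PtP0 (X Y : {set 'I_n}) : [disjoint X & Y] -> (Pm X)^T *m Pm Y = 0.
Proof.
move=> dXY; apply/matrixP => i j; rewrite PtM !mxE.
case: eqP => // E.
have := enum_valP i; have := enum_valP j; rewrite -E => hY hX.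
by move: dXY => /disjointFr /(_ hX); rewrite hY.
Qed.

Lemma PPt (X : {set 'I_n}) (u : 'cV[R]_n) i : (Pm X *m ((Pm X)^T *m u)) i 0 = if i \in X then u i 0 else 0.
Proof.
rewrite mxE.
under eq_bigr do rewrite PtM mxE.
rewrite -(big_enum_val (fun y => (i == y)%:R * u y 0)) /=.
case: ifP => iX.
  rewrite (bigD1 i) //= eqxx mul1r big1 ?addr0 // => k /andP[_ /negbTE]; by rewrite eq_sym => ->; rewrite mul0r.
rewrite big1 // => k kX; case: eqP => [E|]; last by rewrite mul0r.
by move: iX; rewrite E kX.
Qed.

Lemma supp_P (X : {set 'I_n}) (z : 'cV[R]_#|X|) i : i \notin X -> (Pm X *m z) i 0 = 0.
Proof.
move=> iX; rewrite mxE big1 // => k _; rewrite mxE.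
case: eqP => [E|]; last by rewrite mul0r.
by move: iX; rewrite E enum_valP.
Qed.

Lemma entryD m p (A B : 'M[R]_(m,p)) i j : (A + B) i j = A i j + B i j.
Proof. by rewrite !mxE. Qed.
Lemma entryN m p (A : 'M[R]_(m,p)) i j : (- A) i j = - A i j.
Proof. by rewrite !mxE. Qed.
Lemma entryB m p (A B : 'M[R]_(m,p)) i j : (A - B) i j = A i j - B i j.
Proof. by rewrite !mxE. Qed.

Variable M : 'M[R]_n.
Hypothesis Msym : M^T = M.

Definition Bf (u v : 'cV[R]_n) := (u^T *m M *m v) 0 0.
Definition supp (X : {set 'I_n}) (u : 'cV[R]_n) := forall i, i \notin X -> u i 0 = 0.
Definition pdon (X : {set 'I_n}) := forall u, supp X u -> u != 0 -> 0 < Bf u u.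

Lemma BfDl u v w : Bf (u + v) w = Bf u w + Bf v w.
Proof. by rewrite /Bf linearD /= !mulmxDl entryD. Qed.
Lemma BfDr u v w : Bf w (u + v) = Bf w u + Bf w v.
Proof. by rewrite /Bf mulmxDr entryD. Qed.
Lemma BfNl u w : Bf (- u) w = - Bf u w.
Proof. by rewrite /Bf linearN /= !mulNmx entryN. Qed.
Lemma BfNr u w : Bf w (- u) = - Bf w u.
Proof. by rewrite /Bf mulmxN entryN. Qed.
Lemma Bf0l w : Bf 0 w = 0.
Proof. by rewrite /Bf linear0 !mul0mx mxE. Qed.
Lemma Bf0r w : Bf w 0 = 0.
Proof. by rewrite /Bf mulmx0 mxE. Qed.
Lemma BfC u v : Bf u v = Bf v u.
Proof.
have tr1 (A : 'M[R]_1) : A 0 0 = A^T 0 0 by rewrite mxE.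
by rewrite /Bf tr1 !trmx_mul trmxK Msym mulmxA.
Qed.

Lemma Bf_sum u v : Bf u v = \sum_i \sum_j u i 0 * M i j * v j 0.
Proof.
rewrite /Bf mxE exchange_big /=; apply: eq_bigr => j _; rewrite mxE big_distrl /=.
by apply: eq_bigr => i _; rewrite mxE.
Qed.

Lemma pdon_ge0 X v : pdon X -> supp X v -> 0 <= Bf v v.
Proof.
move=> pd sv; have [->|nz] := eqVneq v 0; first by rewrite Bf0l.
exact/ltW/pd.
Qed.

Lemma Bf_zero (A B : {set 'I_n}) u w :
  (forall i j, i \in A -> j \in B -> M i j = 0) -> supp A u -> supp B w ->
  Bf u w = 0.
Proof.
move=> hAB sA sB; rewrite Bf_sum big1 // => i _; rewrite big1 // => j _.
case: (boolP (i \in A)) => iA; last by rewrite sA // !mul0r.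
case: (boolP (j \in B)) => jB; last by rewrite sB // mulr0.
by rewrite hAB // mulr0 mul0r.
Qed.

Lemma supp_PP (X : {set 'I_n}) z : supp X (Pm X *m z).
Proof. by move=> i; apply: supp_P. Qed.

Lemma MXX_unit (X : {set 'I_n}) : pdon X -> (Pm X)^T *m M *m Pm X \in unitmx.
Proof.
move=> pd; rewrite unitmxE unitfE; apply/negP => /det0P [v vn0 vM0].
have nz : Pm X *m v^T != 0.
  apply: contra vn0 => /eqP h.
  by rewrite -(trmxK v) -[v^T]mul1mx -(PtP X) -mulmxA h mulmx0 linear0.
have := pd _ (supp_PP _) nz.
rewrite /Bf trmx_mul trmxK !mulmxA -(mulmxA v) -(mulmxA v) vM0 mul0mx mxE.
by rewrite ltxx.
Qed.

Definition gam (X : {set 'I_n}) (s : 'cV[R]_n) :=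
  Pm X *m (invmx ((Pm X)^T *m M *m Pm X) *m ((Pm X)^T *m M *m s)).

Lemma Bf_gam X z s : pdon X -> Bf (Pm X *m z) (gam X s) = Bf (Pm X *m z) s.
Proof.
move=> pd; rewrite /Bf /gam.
have -> : (Pm X *m z)^T *m M *m (Pm X *m (invmx ((Pm X)^T *m M *m Pm X) *m ((Pm X)^T *m M *m s)))
   = z^T *m (((Pm X)^T *m M *m Pm X) *m invmx ((Pm X)^T *m M *m Pm X)) *m ((Pm X)^T *m M *m s)
  by rewrite trmx_mul !mulmxA.
rewrite mulmxV ?MXX_unit // mulmx1; congr (_ 0 0).
by rewrite trmx_mul !mulmxA.
Qed.

Lemma gam0 X : gam X 0 = 0.
Proof. by rewrite /gam !mulmx0. Qed.

Section Schur.
Variables A S B : {set 'I_n}.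
Hypothesis dAS : [disjoint A & S].
Hypothesis dAB : [disjoint A & B].
Hypothesis dSB : [disjoint S & B].
Hypothesis hAB : forall i j, i \in A -> j \in B -> M i j = 0.
Hypothesis pdA : pdon A.
Hypothesis pdB : pdon B.

Lemma hBA i j : i \in B -> j \in A -> M i j = 0.
Proof. by move=> iB jA; rewrite -Msym mxE hAB. Qed.

Lemma quad_id (a' : 'cV[R]_#|A|) (b' : 'cV[R]_#|B|) s :
  Bf (Pm A *m a' - gam A s + (Pm B *m b' - gam B s) + s)
     (Pm A *m a' - gam A s + (Pm B *m b' - gam B s) + s)
  = Bf (Pm A *m a') (Pm A *m a') + Bf (Pm B *m b') (Pm B *m b')
    + Bf s s - Bf (gam A s) s - Bf (gam B s) s.
Proof.
have f1 := Bf_gam a' s pdA.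
have f2 := Bf_gam (invmx ((Pm A)^T *m M *m Pm A) *m ((Pm A)^T *m M *m s)) s pdA.
have f3 := Bf_gam b' s pdB.
have f4 := Bf_gam (invmx ((Pm B)^T *m M *m Pm B) *m ((Pm B)^T *m M *m s)) s pdB.
rewrite -/(gam A s) in f2; rewrite -/(gam B s) in f4.
have z1 : Bf (Pm A *m a') (Pm B *m b') = 0 by apply: Bf_zero hAB _ _; apply: supp_PP.
have z2 : Bf (Pm A *m a') (gam B s) = 0 by apply: Bf_zero hAB _ _; apply: supp_PP.
have z3 : Bf (gam A s) (Pm B *m b') = 0 by apply: Bf_zero hAB _ _; apply: supp_PP.
have z4 : Bf (gam A s) (gam B s) = 0 by apply: Bf_zero hAB _ _; apply: supp_PP.
have c1 := BfC (Pm A *m a') (Pm B *m b').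
have c2 := BfC (Pm A *m a') (gam B s).
have c3 := BfC (gam A s) (Pm B *m b').
have c4 := BfC (gam A s) (gam B s).
have c5 := BfC (Pm A *m a') (gam A s).
have c6 := BfC (Pm A *m a') s.
have c7 := BfC (gam A s) s.
have c8 := BfC (Pm B *m b') (gam B s).
have c9 := BfC (Pm B *m b') s.
have c10 := BfC (gam B s) s.
rewrite !(BfDl, BfDr, BfNl, BfNr).
lra.
Qed.

Lemma submx_tr (X Y : {set 'I_n}) : (submx_set M X Y)^T = submx_set M Y X.
Proof. by apply/matrixP => i j; rewrite !mxE -[M in LHS]Msym mxE. Qed.

Definition Tmx :=
  submx_set M S S - submx_set M S A *m invmx (submx_set M A A) *m submx_set M A S
  - submx_set M S B *m invmx (submx_set M B B) *m submx_set M B S.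

Lemma Tsym : Tmx^T = Tmx.
Proof.
by rewrite /Tmx !linearB /= !trmx_mul !trmx_inv !submx_tr !mulmxA.
Qed.

Lemma Tform x : (x^T *m Tmx *m x) 0 0 =
  Bf (Pm S *m x) (Pm S *m x) - Bf (Pm S *m x) (gam A (Pm S *m x))
  - Bf (Pm S *m x) (gam B (Pm S *m x)).
Proof.
rewrite /Tmx !mulmxBr !mulmxBl !entryB !submxE /Bf /gam.
by rewrite !trmx_mul !mulmxA.
Qed.

Lemma dSA : [disjoint S & A]. Proof. by rewrite disjoint_sym. Qed.
Lemma dBA : [disjoint B & A]. Proof. by rewrite disjoint_sym. Qed.
Lemma dBS : [disjoint B & S]. Proof. by rewrite disjoint_sym. Qed.

Lemma schur_onlyif : pdon (A :|: S :|: B) -> posdef Tmx.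
Proof.
move=> pd; split; first exact: Tsym.
move=> x xn0; rewrite Tform; set s := Pm S *m x.
have q := quad_id 0 0 s; rewrite !mulmx0 !Bf0l in q.
set u := (0 - gam A s + (0 - gam B s) + s) in q.
have su : supp (A :|: S :|: B) u.
  move=> i; rewrite !inE => /norP[/norP[iA iS] iB].
  by rewrite /u !(entryD, entryN) /gam /s !supp_P // mxE oppr0 !add0r.
have nz : u != 0.
  have : (Pm S)^T *m u = x.
    by rewrite /u /gam /s !mulmxDr !mulmxN !mulmx0 !mulmxA (PtP0 dSA) (PtP0 dSB)
      !mul0mx PtP mul1mx !oppr0 !add0r.
  by move=> h; apply: contra xn0 => /eqP u0; rewrite -h u0 mulmx0.
have := pd u su nz; rewrite q.
have c1 := BfC s (gam A s); have c2 := BfC s (gam B s).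
lra.
Qed.

Lemma schur_if : posdef Tmx -> pdon (A :|: S :|: B).
Proof.
move=> [_ Tpd] u su un0.
set x := (Pm S)^T *m u; set s := Pm S *m x.
set a' := (Pm A)^T *m u + invmx ((Pm A)^T *m M *m Pm A) *m ((Pm A)^T *m M *m s).
set b' := (Pm B)^T *m u + invmx ((Pm B)^T *m M *m Pm B) *m ((Pm B)^T *m M *m s).
have decu : u = Pm A *m ((Pm A)^T *m u) + Pm B *m ((Pm B)^T *m u) + s.
  apply/matrixP => i j; rewrite (ord1 j) !entryD !PPt.
  case: (boolP (i \in A)) => iA.
    by rewrite (disjointFr dAB iA) (disjointFr dAS iA) !addr0.
  case: (boolP (i \in B)) => iB.
    by rewrite (disjointFr dBS iB) addr0 add0r.
  case: (boolP (i \in S)) => iS; first by rewrite !add0r.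
  rewrite !add0r su // !in_setU (negbTE iA) (negbTE iB) (negbTE iS) //=.
have dec : u = Pm A *m a' - gam A s + (Pm B *m b' - gam B s) + s.
  by rewrite /a' /b' /gam !mulmxDr !addrK {1}decu.
rewrite dec quad_id.
have hA := pdon_ge0 pdA (supp_PP a'); have hB := pdon_ge0 pdB (supp_PP b').
have [x0|xn0] := eqVneq x 0.
  have s0 : s = 0 by rewrite /s x0 mulmx0.
  rewrite s0 !gam0 !Bf0l !subr0 !addr0.
  rewrite s0 !gam0 !subr0 addr0 in dec.
  have [a0|an0] := eqVneq (Pm A *m a') 0.
    rewrite a0 add0r in dec; rewrite a0 Bf0l add0r.
    by apply: pdB (supp_PP _) _; rewrite -dec.
  have := pdA (supp_PP a') an0; lra.
have := Tpd x xn0; rewrite Tform -/s.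
have c1 := BfC s (gam A s); have c2 := BfC s (gam B s).
lra.
Qed.
End Schur.
End Mx.

Lemma zid (V : zmodType) (X Y Z : V) : (X - Y) + (X - Z) - X = X - Y - Z.
Proof. by rewrite addrC addrA addKr addrC addrAC. Qed.

Lemma pdon_sub (R : realFieldType) n (M : 'M[R]_n) (X Y : {set 'I_n}) :
  X \subset Y -> pdon M Y -> pdon M X.
Proof.
move=> XY pd u su; apply: pd => i iY; apply: su.
by apply: contra iY; apply: (subsetP XY).
Qed.

Lemma clique_pd (R : realFieldType) n (e : rel 'I_n) (N : 'M[R]_n) C :
  posdef N -> complete_set e C -> pdon (restrict_graph e N) C.
Proof.
move=> [_ Npd] hC u su un0.
suff -> : Bf (restrict_graph e N) u u = Bf N u u by apply: Npd.
rewrite !Bf_sum; apply: eq_bigr => i _; apply: eq_bigr => j _.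
case: (boolP (i \in C)) => iC; last by rewrite su // !mul0r.
case: (boolP (j \in C)) => jC; last by rewrite (su j) // !mulr0.
rewrite mxE; case: eqVneq => //= ij.
move/forallP: hC => /(_ i) /implyP /(_ iC) /forallP /(_ j) /implyP /(_ jC).
by rewrite ij /= => ->.
Qed.

Theorem theorem6 (R : realFieldType) (n : nat) (e : rel 'I_n)
  (s : seq {set 'I_n}) (N : 'M[R]_n) :
  simple_graph e -> connected_graph e -> chordal e ->
  perfect_ordering e s ->
  posdef N ->
  let M := restrict_graph e N in
  posdef M <->
  (forall q, (1 <= q < size s)%N ->
     let S := Sep s q in let A := Aset s q in let B := Bset s q in
     let S1 := submx_set M S S - submx_set M S A *m invmx (submx_set M A A)
                                   *m submx_set M A S in
     let S2 := submx_set M S S - submx_set M S B *m invmx (submx_set M B B)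
                                   *m submx_set M B S in
     posdef (S1 + S2 - submx_set M S S)).
Proof.
move=> sg _ _ po Npd M.
have Msym : M^T = M.
  apply/matrixP => i j; rewrite !mxE eq_sym sg.1.
  by have := congr1 (fun A : 'M[R]_n => A i j) Npd.1; rewrite mxE => ->.
have posM : posdef M <-> pdon M setT.
  split => [[_ h] u _ un0|h]; first exact: h.
  by split=> // u un0; apply: h => // i; rewrite inE.
have key : forall q, (1 <= q < size s)%N -> pdon M (Hun s q) ->
   pdon M (Aset s q :|: Sep s q :|: Bset s q) <-> posdef (Tmx M (Aset s q) (Sep s q) (Bset s q)).
  move=> q hq pdH.
  have dAS : [disjoint Aset s q & Sep s q].
    rewrite -setI_eq0; apply/eqP/setP => x; rewrite /Aset /Sep !inE.
    by case: (x \in Hun s q); case: (x \in nth set0 s q).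
  have dAB : [disjoint Aset s q & Bset s q].
    rewrite -setI_eq0; apply/eqP/setP => x; rewrite /Aset /Bset /Sep !inE.
    by case: (x \in Hun s q); case: (x \in nth set0 s q).
  have dSB : [disjoint Sep s q & Bset s q].
    rewrite -setI_eq0; apply/eqP/setP => x; rewrite /Bset /Sep !inE.
    by case: (x \in Hun s q); case: (x \in nth set0 s q).
  have hAB : forall i j, i \in Aset s q -> j \in Bset s q -> M i j = 0.
    move=> i j iA jB; rewrite mxE (negbTE (no_edge sg po hq iA jB)) orbF.
    case: eqVneq => // ij; move: iA jB; rewrite ij /Aset /Bset /Sep !inE.
    by case: (j \in Hun s q); case: (j \in nth set0 s q).
  have pdA : pdon M (Aset s q).
    by apply: pdon_sub pdH; apply/subsetP => x; rewrite /Aset inE => /andP[].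
  have pdB : pdon M (Bset s q).
    apply: (@pdon_sub _ _ _ _ (nth set0 s q)).
      by apply/subsetP => x; rewrite /Bset inE => /andP[].
    apply: clique_pd Npd _; apply: maxsetp; apply: (in_s_clique po).
    by apply: mem_nth; case/andP: hq.
  split; first exact: schur_onlyif.
  exact: schur_if.
have unionE : forall q, Hun s q.+1 = Aset s q :|: Sep s q :|: Bset s q.
  move=> q; apply/setP => x; rewrite HunS /Aset /Bset /Sep !inE.
  by case: (x \in Hun s q); case: (x \in nth set0 s q).
rewrite posM; split.
  move=> pd q hq S A B S1 S2.
  rewrite /S1 /S2 zid.
  have pdq : pdon M (Hun s q) by apply: pdon_sub pd; apply: subsetT.
  have := (key q hq pdq).1; rewrite -unionE => /(_ (pdon_sub (subsetT _) pd)).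
  by [].
move=> cond.
have ind : forall q, (1 <= q <= size s)%N -> pdon M (Hun s q).
  elim => [|q IH]; first by [].
  move=> /andP[_ qs].
  case: q IH qs => [|q] IH qs.
    rewrite HunS /Hun big_ord0 set0U.
    apply: clique_pd Npd _; apply: maxsetp; apply: (in_s_clique po).
    exact: mem_nth.
  have hq : (1 <= q.+1 < size s)%N by [].
  rewrite unionE; apply/(key _ hq (IH (ltnW qs))).
  have := cond _ hq; rewrite /= zid; exact.
have := ind (size s); rewrite (size_pos po) leqnn => /(_ isT) pd.
apply: pdon_sub pd; apply/subsetP => x _; exact: (cover po).
Qed.
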